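(* In the $\ell$-variant cup game, if at some time there is a cup of fill $k$ for some integer $k\ge3$, then at that time there is a cup of fill $k-1$ or a cup of fill $k-2$.
   Context: The $\ell$-variant cup game on $n$ cups ($\ell$ a positive integer): $n$ cups with integer fills, all initially $0$. In each round the player chooses an integer $k'\ge0$ and an integer $q\ge1$ such that at least $2q$ cups have fill exactly $k'$. Among these cups, exactly $q$ are raised to $k'+1$; if $k'$ is a multiple of $\ell$ the other $q$ stay at $k'$, and otherwise $q$ other such cups are lowered to $k'-1$. *)

(* Defs.v *)
From mathcomp Require Import all_boot.
Set Implicit Arguments. Unset Strict Implicit. Unset Printing Implicit Defensive.

(* Fills are always nonnegative in this game (a cup of fill 0 is never
   lowered since 0 is a multiple of l), so nat is used. *)
Definition config (n : nat) := {ffun 'I_n -> nat}.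

Definition init_config (n : nat) : config n := [ffun _ => 0].

Definition cup_step (l n : nat) (c c' : config n) : Prop :=
  exists (k' q : nat) (U D : {set 'I_n}),
    1 <= q /\
    2 * q <= #|[set i | c i == k']| /\
    (forall i, i \in U -> c i = k') /\
    (forall i, i \in D -> c i = k') /\
    #|U| = q /\
    [disjoint U & D] /\
    (if l %| k' then D = set0 else #|D| = q) /\
    (forall i, c' i = if i \in U then k'.+1
                      else if i \in D then k'.-1 else c i).

Inductive reachable (l n : nat) : config n -> Prop :=
| reach_init : reachable l (init_config n)
| reach_step c c' : reachable l c -> cup_step l c c' -> reachable l c'.

(* Main.v *)
Require Import Defs.
From mathcomp Require Import all_boot.
From mathcomp Require Import zify.

Definition Pinv {n : nat} (c : config n) : Prop :=
  forall k, 3 <= k -> (exists i, c i = k) ->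
  exists j : 'I_n, c j = k - 1 \/ c j = k - 2.

Lemma step_inv (l n : nat) (c c' : config n) :
  Pinv c -> cup_step l c c' -> Pinv c'.
Proof.
move=> IH [k' [q [U [D [q1 [card2 [HU [HD [cU [dUD [hD Hc']]]]]]]]]]].
have F : forall j, c j != k' -> c' j = c j.
  move=> j hj; rewrite Hc'.
  case: ifP => [/HU|_]; first by move=> e; rewrite e eqxx in hj.
  case: ifP => [/HD|_] //; by move=> e; rewrite e eqxx in hj.
have L : exists j, c' j = k' \/ c' j = k'.-1.
  case: (l %| k') hD => hD.
  - have : ~~ ([set i | c i == k'] \subset U).
      apply/negP => /subset_leq_card; rewrite cU; lia.
    case/subsetPn => j; rewrite inE => /eqP cj jU.
    exists j; left; rewrite Hc' (negbTE jU) hD inE; done.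
  - have : 0 < #|D| by rewrite hD.
    case/card_gt0P => d dD.
    have dU : d \notin U by rewrite (disjointFl dUD dD).
    exists d; right; by rewrite Hc' (negbTE dU) dD.
have Un : exists u, u \in U.
  by apply/card_gt0P; rewrite cU.
move=> k k3 [i ci].
move: ci; rewrite Hc'.
case: ifP => iU.
  move=> ek; case: L => j hj; exists j; lia.
case: ifP => iD.
  move=> ek.
  have ci : c i = k' by apply: HD.
  have [j hj] := IH k' ltac:(lia) (ex_intro _ i ci).
  have G : forall j2, c j2 = k' - 2 \/ c j2 = k' - 3 ->
       exists j : 'I_n, c' j = k - 1 \/ c' j = k - 2.
    move=> j2 h2; exists j2; rewrite F; [lia | apply/eqP; lia].
  case: hj => hj; last by apply: (G j); lia.
  have cjk : c j = k by lia.
  have [j2 hj2] := IH k ltac:(lia) (ex_intro _ j cjk).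
  apply: (G j2); lia.
move=> ci.
have [j hj] := IH k k3 (ex_intro _ i ci).
case: (eqVneq (c j) k') => cj.
  have : k' = k - 1 \/ k' = k - 2 by lia.
  case=> ek.
    case: L => j2 h2; exists j2; lia.
  case: Un => u uU; exists u; rewrite Hc' uU; lia.
exists j; rewrite F //.
Qed.

Theorem proposition6p5 (l n : nat) (c : config n) (i : 'I_n) (k : nat) :
  0 < l -> reachable l c -> 3 <= k -> c i = k ->
  exists j : 'I_n, c j = k - 1 \/ c j = k - 2.
Proof.
move=> _ R k3 ci.
have : Pinv c.
  elim: R => [|c0 c1 _ IH st]; last exact: step_inv IH st.
  move=> k0 k03 [i0]; rewrite ffunE; lia.
by move/(_ k k3 (ex_intro _ i ci)).
Qed.
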